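(* Let $G$ be a graph with $n$ vertices, $m$ edges, and maximum degree at most $\Delta$, where $\Delta$ is a positive integer. If $d\in\{0,1,\ldots,\Delta-1\}$ is such that $$\frac{2m}{n}\in\left[\frac{2\Delta d}{\Delta+d},\ \frac{2\Delta(d+1)}{\Delta+d+1}\right],$$ then $$irr(G)\leq d(d+1)n+\frac{1}{\Delta}\left(\Delta^2-(2d+1)\Delta-d^2-d\right)m.$$
   Context: All graphs are finite, simple and undirected. For a graph $G$ with edge set $E(G)$ and vertex degrees $d_G(u)$, the irregularity (in the sense of Albertson) is $irr(G)=\sum_{uv\in E(G)}|d_G(u)-d_G(v)|$. *)

(* Defs.v *)
From mathcomp Require Import all_boot all_order all_algebra.
Set Implicit Arguments. Unset Strict Implicit. Unset Printing Implicit Defensive.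
Import Order.TTheory GRing.Theory Num.Theory.

Definition simple_graph (T : finType) (e : rel T) : Prop :=
  symmetric e /\ irreflexive e.

Definition deg (T : finType) (e : rel T) (x : T) : nat := #|[set y | e x y]|.

Definition edges (T : finType) (e : rel T) : {set {set T}} :=
  [set [set x; y] | x in T, y in T & e x y].

Definition nedges (T : finType) (e : rel T) : nat := #|edges e|.

(* Albertson irregularity: sum over edges uv of |d(u) - d(v)|; each unordered
   edge is counted twice among ordered adjacent pairs, hence the halving. *)
Definition irr (T : finType) (e : rel T) : rat :=
  (\sum_(x : T) \sum_(y : T | e x y)
      `|(deg e x)%:R - (deg e y)%:R| : rat) / 2.

(* Main.v *)
Require Import Defs.
From mathcomp Require Import all_boot all_order all_algebra.
Import Order.TTheory GRing.Theory Num.Theory.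
From mathcomp Require Import ring lra zify.

Lemma handshake (T : finType) (e : rel T) : simple_graph e ->
  (\sum_(x : T) deg e x = 2 * nedges e)%N.
Proof.
move=> [esym eirr].
have -> : \sum_(x : T) deg e x = \sum_(x : T) \sum_(y | e x y) 1.
  by apply: eq_bigr => x _; rewrite /deg sum1_card cardsE.
rewrite (pair_big_dep xpredT (fun x y => e x y) (fun _ _ => 1)) /=.
rewrite (partition_big (fun p : T * T => [set p.1; p.2]) (mem (edges e))) /=; last first.
  by move=> [x y] /= exy; apply/imset2P; exists x y => //; rewrite inE.
rewrite /nedges -sum1_card big_distrr /=.
apply: eq_bigr => E /imset2P [x y _]; rewrite inE => /andP [_ exy] ->.
have xy : x != y by apply: contraTneq exy => ->; rewrite eirr.
rewrite muln1.
have -> : (\sum_(p | e p.1 p.2 && ([set p.1; p.2] == [set x; y])) 1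
   = \sum_(p in [set (x, y); (y, x)]) 1)%N.
  apply: eq_bigl => [[a b]] /=; rewrite !inE.
  apply/idP/idP.
    move=> /andP [eab /eqP Eq].
    have ha : a \in [set x; y] by rewrite -Eq !inE eqxx.
    have hb : b \in [set x; y] by rewrite -Eq !inE eqxx orbT.
    have nab : a != b by apply: contraTneq eab => ->; rewrite eirr.
    move: ha hb; rewrite !inE => /orP [] /eqP ea /orP [] /eqP eb;
      subst; rewrite ?eqxx ?orbT //; by rewrite eqxx in nab.
  move=> /orP [] /eqP [-> ->] /=; rewrite ?exy ?eqxx //.
  by rewrite esym exy setUC eqxx.
rewrite sum1_card cards2.
by case: eqP => // [[]] /eqP; rewrite (negbTE xy).
Qed.
Local Open Scope ring_scope.
Lemma half_bound (a b D d : nat) : (1 <= a)%N -> (a <= b)%N -> (b <= D)%N ->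
  b%:R - a%:R <= (d%:R * d.+1%:R) / a%:R + (d%:R * d.+1%:R) / b%:R
     + (D%:R ^+ 2 - (2 * d%:R + 1) * D%:R - d%:R ^+ 2 - d%:R) / D%:R :> rat.
Proof.
move=> a1 ab bD; set c : rat := d%:R * d.+1%:R.
have a0 : (0 : rat) < a%:R by rewrite ltr0n.
have b0 : (0 : rat) < b%:R by rewrite ltr0n; lia.
have D0 : (0 : rat) < D%:R by rewrite ltr0n; lia.
have c0 : (0 : rat) <= c by rewrite /c mulr_ge0.
have h1 : (2 * d%:R + 1 - a%:R) <= c / a%:R.
  rewrite ler_pdivlMr // /c.
  have [ad|da] := leqP a d.
    have : (a%:R : rat) <= d%:R by rewrite ler_nat.
    rewrite -?natr1; nra.
  have : (d%:R + 1 : rat) <= a%:R by rewrite natr1 ler_nat.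
  rewrite -?natr1; nra.
have h2 : c / D%:R <= c / b%:R.
  rewrite ler_pdivrMr //.
  have q1 : 1 <= D%:R / (b%:R : rat) by rewrite ler_pdivlMr // mul1r ler_nat.
  have -> : c / b%:R * D%:R = c * (D%:R / b%:R) by rewrite mulrAC mulrA.
  nra.
have h3 : (D%:R ^+ 2 - (2 * d%:R + 1) * D%:R - d%:R ^+ 2 - d%:R) / D%:R
   = D%:R - (2 * d%:R + 1) - c / D%:R :> rat.
  rewrite /c -natr1; field; lra.
have h4 : (b%:R : rat) <= D%:R by rewrite ler_nat.
rewrite h3; lra.
Qed.

Lemma pair_bound (a b D d : nat) : (1 <= a)%N -> (1 <= b)%N -> (a <= D)%N -> (b <= D)%N ->
  `|a%:R - b%:R| <= (d%:R * d.+1%:R) / a%:R + (d%:R * d.+1%:R) / b%:R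
     + (D%:R ^+ 2 - (2 * d%:R + 1) * D%:R - d%:R ^+ 2 - d%:R) / D%:R :> rat.
Proof.
move=> a1 b1 aD bD.
have [ab|ba] := leqP a b.
  rewrite distrC ger0_norm; first exact: half_bound.
  by rewrite subr_ge0 ler_nat.
rewrite ger0_norm; last by rewrite subr_ge0 ler_nat ltnW.
rewrite (addrC (_ / a%:R)); apply: half_bound => //; exact: ltnW.
Qed.

Theorem theorem1 (T : finType) (e : rel T) (Delta d : nat) :
  simple_graph e ->
  (0 < #|T|)%N ->
  (0 < Delta)%N ->
  (forall x : T, (deg e x <= Delta)%N) ->
  (d < Delta)%N ->
  (2 * Delta%:R * d%:R) / (Delta%:R + d%:R) <= 2 * (nedges e)%:R / (#|T|%:R) :> rat ->
  2 * (nedges e)%:R / (#|T|%:R) <= (2 * Delta%:R * d.+1%:R) / (Delta%:R + d.+1%:R) :> rat ->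
  irr e <= d%:R * d.+1%:R * (#|T|)%:R
           + (Delta%:R ^+ 2 - (2 * d%:R + 1) * Delta%:R - d%:R ^+ 2 - d%:R)
             / Delta%:R * (nedges e)%:R.
Proof.
move=> G _ _ degD _ _ _.
have [esym eirr] := G.
set c : rat := d%:R * d.+1%:R.
set beta : rat := (_ / Delta%:R).
have c0 : 0 <= c by rewrite /c mulr_ge0.
have degpos : forall x y, e x y -> (1 <= deg e x)%N.
  move=> x y exy; rewrite /deg card_gt0; apply/set0Pn; exists y; by rewrite inE.
have cnst : forall x (k : rat), \sum_(y | e x y) k = k *+ deg e x.
  by move=> x k; rewrite sumr_const /deg cardsE.
rewrite /irr ler_pdivrMr // .
apply: le_trans (_ : \sum_x \sum_(y | e x y) (c / (deg e x)%:R + c / (deg e y)%:R + beta) <= _).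
  apply: ler_sum => x _; apply: ler_sum => y exy.
  apply: pair_bound; [exact: degpos exy | | exact: degD | exact: degD].
  by apply: (degpos y x); rewrite esym.
have hB : \sum_x \sum_(y | e x y) c / (deg e y)%:R
        = \sum_x \sum_(y | e x y) c / (deg e x)%:R.
  rewrite (exchange_big_dep xpredT) //=; apply: eq_bigr => y _; apply: eq_bigl => x.
  by rewrite esym.
have hA : \sum_x \sum_(y | e x y) c / (deg e x)%:R <= c * (#|T|)%:R.
  rewrite mulr_natr -sumr_const; apply: ler_sum => x _.
  rewrite cnst; case E: (deg e x) => [|k]; first by rewrite mulr0n.
  by rewrite -[_ *+ k.+1]mulr_natr divfK // pnatr_eq0.
have hC : \sum_x \sum_(y | e x y) beta = beta * (nedges e)%:R * 2.
  under eq_bigr => x _ do rewrite cnst.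
  by rewrite sumrMnr handshake // -[beta *+ _]mulr_natr natrM mulrA mulrAC.
under eq_bigr => x _ do rewrite !big_split /=.
rewrite !big_split /= hB hC.
lra.
Qed.
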